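(* Let $R$ be a reduced root system and let $W$ be its Weyl group. Let $(t_1,\ldots,t_n)$ be an $n$-tuple of reflections in $W$ with $t_1t_2\cdots t_n=1$. Then $(t_1,\ldots,t_n)$ is braid-equivalent to an $n$-tuple $(t'_1,\ldots,t'_n)$ of reflections with $t'_1t'_2\cdots t'_n=1$ and $t'_1=t'_2$.
   Context: For a group $G$, an elementary transformation (braid move) of an $n$-tuple $(t_1,\ldots,t_n)\in G^n$ is, for some $1\leq i\leq n-1$, either the replacement of $(t_i,t_{i+1})$ by $(t_it_{i+1}t_i^{-1},t_i)$ or by $(t_{i+1},t_{i+1}^{-1}t_it_{i+1})$, leaving the other entries unchanged. Two $n$-tuples are braid-equivalent if one is obtained from the other by a finite sequence of elementary transformations. *)

(* Defs.v *)
From HB Require Import structures.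
From mathcomp Require Import all_boot all_order all_algebra.
From mathcomp Require Import reals.
From Stdlib Require Import Relation_Operators.
Set Implicit Arguments. Unset Strict Implicit. Unset Printing Implicit Defensive.
Import Order.TTheory GRing.Theory Num.Theory.
Local Open Scope ring_scope.

Definition dot (R : realType) (d : nat) (x y : 'rV[R]_d) : R := (x *m y^T) 0 0.

(* Orthogonal reflection s_a : x |-> x - 2 (x,a)/(a,a) a, as a matrix acting
   on row vectors by right multiplication (x |-> x *m refl_mx a). *)
Definition refl_mx (R : realType) (d : nat) (a : 'rV[R]_d) : 'M[R]_d :=
  1%:M - (2 / dot a a) *: (a^T *m a).

Definition reduced_root_system (R : realType) (d : nat) (rs : seq 'rV[R]_d) : Prop :=
  [/\ uniq rs, 0 \notin rs &
      (forall v : 'rV[R]_d, exists c : 'I_(size rs) -> R,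
          v = \sum_(i < size rs) c i *: rs`_i)] /\
  [/\
      (forall a b, a \in rs -> b \in rs -> b *m refl_mx a \in rs),
      (forall a b, a \in rs -> b \in rs -> 2 * dot b a / dot a a \is a Num.int)
    & (forall a (c : R), a \in rs -> c *: a \in rs -> c = 1 \/ c = -1)].

Inductive in_weyl (R : realType) (d : nat) (rs : seq 'rV[R]_d) : 'M[R]_d -> Prop :=
  | weyl1 : in_weyl rs 1%:M
  | weyl_refl a (t : 'M[R]_d) : a \in rs -> in_weyl rs t -> in_weyl rs (refl_mx a *m t).

Definition weyl_reflection (R : realType) (d : nat) (rs : seq 'rV[R]_d) (t : 'M[R]_d) : Prop :=
  exists2 a, a \in rs & t = refl_mx a.

Definition mprod (R : realType) (d : nat) (s : seq 'M[R]_d) : 'M[R]_d :=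
  foldr mulmx 1%:M s.

Inductive braid_step (G : Type) (mul : G -> G -> G) (inv : G -> G) :
    seq G -> seq G -> Prop :=
  | braid_l (p q : seq G) (a b : G) :
      braid_step mul inv (p ++ a :: b :: q) (p ++ mul (mul a b) (inv a) :: a :: q)
  | braid_r (p q : seq G) (a b : G) :
      braid_step mul inv (p ++ a :: b :: q) (p ++ b :: mul (mul (inv b) a) b :: q).

Definition braid_equiv (G : Type) (mul : G -> G -> G) (inv : G -> G) (s t : seq G) : Prop :=
  clos_refl_trans_1n (seq G) (braid_step mul inv) s t.

Definition weyl_braid_equiv (R : realType) (d : nat) (s t : seq 'M[R]_d) : Prop :=
  braid_equiv (@mulmx R d d d) (@invmx R d) s t.

(* Main.v *)
Require Import Defs.
From HB Require Import structures.
From mathcomp Require Import all_boot all_order all_algebra.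
From mathcomp Require Import reals.
From mathcomp Require Import ring lra zify.
From Stdlib Require Import Relation_Operators Classical.
Import Order.TTheory GRing.Theory Num.Theory.
Local Open Scope ring_scope.
Set Implicit Arguments. Unset Strict Implicit.


Lemma dotE (R : realType) d (x y : 'rV[R]_d) : dot x y = \sum_i x 0 i * y 0 i.
Proof. by rewrite /dot !mxE; apply: eq_bigr => i _; rewrite mxE. Qed.

Lemma dotC (R : realType) d (x y : 'rV[R]_d) : dot x y = dot y x.
Proof. by rewrite !dotE; apply: eq_bigr => i _; rewrite mulrC. Qed.

Lemma dotDl (R : realType) d (x y z : 'rV[R]_d) : dot (x + y) z = dot x z + dot y z.
Proof. by rewrite !dotE -big_split; apply: eq_bigr => i _; rewrite mxE mulrDl. Qed.

Lemma dotZl (R : realType) d (c : R) (x z : 'rV[R]_d) : dot (c *: x) z = c * dot x z.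
Proof. by rewrite !dotE mulr_sumr; apply: eq_bigr => i _; rewrite mxE mulrA. Qed.

Lemma dotNl (R : realType) d (x z : 'rV[R]_d) : dot (- x) z = - dot x z.
Proof. by rewrite -scaleN1r dotZl mulN1r. Qed.

Lemma dotBl (R : realType) d (x y z : 'rV[R]_d) : dot (x - y) z = dot x z - dot y z.
Proof. by rewrite dotDl dotNl. Qed.

Lemma dotDr (R : realType) d (x y z : 'rV[R]_d) : dot z (x + y) = dot z x + dot z y.
Proof. by rewrite dotC dotDl !(dotC z). Qed.

Lemma dotZr (R : realType) d (c : R) (x z : 'rV[R]_d) : dot z (c *: x) = c * dot z x.
Proof. by rewrite dotC dotZl dotC. Qed.

Lemma dotNr (R : realType) d (x z : 'rV[R]_d) : dot z (- x) = - dot z x.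
Proof. by rewrite dotC dotNl dotC. Qed.

Lemma dotBr (R : realType) d (x y z : 'rV[R]_d) : dot z (x - y) = dot z x - dot z y.
Proof. by rewrite dotDr dotNr. Qed.

Lemma dot0l (R : realType) d (z : 'rV[R]_d) : dot 0 z = 0.
Proof. by rewrite dotE big1 // => i _; rewrite mxE mul0r. Qed.

Lemma dot_ge0 (R : realType) d (x : 'rV[R]_d) : 0 <= dot x x.
Proof. by rewrite dotE sumr_ge0 // => i _; rewrite -expr2 sqr_ge0. Qed.

Lemma dot_eq0 (R : realType) d (x : 'rV[R]_d) : dot x x = 0 -> x = 0.
Proof.
rewrite dotE => /eqP; rewrite psumr_eq0 => [/allP H|i _]; last by rewrite -expr2 sqr_ge0.
apply/matrixP => i j; rewrite ord1 mxE.
have := H j (mem_index_enum j); rewrite /= mulf_eq0 => /orP[] /eqP //.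
Qed.

Lemma dot_gt0 (R : realType) d (x : 'rV[R]_d) : x != 0 -> 0 < dot x x.
Proof.
move=> nz; rewrite lt_def dot_ge0 andbT; apply/eqP => /dot_eq0 h.
by rewrite h eqxx in nz.
Qed.

Lemma dot_mulmx (R : realType) d (x y : 'rV[R]_d) (M : 'M[R]_d) :
  dot (x *m M) y = dot x (y *m M^T).
Proof. by rewrite /dot trmx_mul trmxK mulmxA. Qed.

Lemma refl_sym (R : realType) d (a : 'rV[R]_d) : (refl_mx a)^T = refl_mx a.
Proof. by rewrite /refl_mx linearB /= trmx1 linearZ /= trmx_mul trmxK. Qed.

Lemma refl_act (R : realType) d (a v : 'rV[R]_d) :
  v *m refl_mx a = v - (2 / dot a a * dot v a) *: a.
Proof.
rewrite /refl_mx mulmxBr mulmx1 -scalemxAr mulmxA.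
rewrite [v *m a^T]mx11_scalar mul_scalar_mx scalerA.
by rewrite [_ * (v *m a^T) 0 0]mulrC.
Qed.

Lemma mx_rows (R : realType) d (A B : 'M[R]_d) :
  (forall v : 'rV[R]_d, v *m A = v *m B) -> A = B.
Proof. by move=> H; apply/row_matrixP => i; rewrite !rowE. Qed.

Lemma refl_root (R : realType) d (a : 'rV[R]_d) : dot a a != 0 ->
  a *m refl_mx a = - a.
Proof.
move=> nz; rewrite refl_act mulfVK // scaler_nat.
by rewrite mulr2n opprD addrA subrr add0r.
Qed.

Lemma refl_invol (R : realType) d (a : 'rV[R]_d) : dot a a != 0 ->
  refl_mx a *m refl_mx a = 1%:M.
Proof.
move=> nz; apply: mx_rows => v; rewrite mulmx1 mulmxA refl_act.
rewrite refl_act dotBl dotZl -addrA -opprD -scalerDl.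
suff -> : 2 / dot a a * dot v a + 2 / dot a a * (dot v a - 2 / dot a a * dot v a * dot a a) = 0
  by rewrite scale0r subr0.
by field.
Qed.

Lemma refl_unit (R : realType) d (a : 'rV[R]_d) : dot a a != 0 ->
  refl_mx a \in unitmx.
Proof. by move=> nz; case: (mulmx1_unit (refl_invol nz)). Qed.

Lemma invmx_refl (R : realType) d (a : 'rV[R]_d) : dot a a != 0 ->
  invmx (refl_mx a) = refl_mx a.
Proof.
move=> nz; rewrite -[invmx _]mulmx1 -(refl_invol nz) mulmxA mulVmx ?mul1mx //.
exact: refl_unit.
Qed.

Lemma dot_refl (R : realType) d (a x y : 'rV[R]_d) : dot a a != 0 ->
  dot (x *m refl_mx a) (y *m refl_mx a) = dot x y.
Proof.
move=> nz; by rewrite dot_mulmx refl_sym -mulmxA refl_invol // mulmx1.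
Qed.

Lemma refl_conj (R : realType) d (a b : 'rV[R]_d) : dot a a != 0 -> dot b b != 0 ->
  refl_mx a *m refl_mx b *m refl_mx a = refl_mx (b *m refl_mx a).
Proof.
move=> na nb; apply: mx_rows => v.
rewrite !mulmxA [v *m refl_mx a *m _]refl_act mulmxBl -scalemxAl -mulmxA refl_invol // mulmx1.
by rewrite [RHS]refl_act dot_refl // dot_mulmx refl_sym.
Qed.

Lemma refl_opp (R : realType) d (a : 'rV[R]_d) : refl_mx (- a) = refl_mx a.
Proof.
rewrite /refl_mx; have -> : (- a)^T = - a^T by apply/matrixP=> i j; rewrite !mxE.
by rewrite /refl_mx dotNl dotNr opprK mulNmx mulmxN opprK.
Qed.


Lemma be_refl (R : realType) d (s : seq 'M[R]_d) : weyl_braid_equiv s s.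
Proof. exact: rt1n_refl. Qed.

Lemma be_trans (R : realType) d (s t u : seq 'M[R]_d) :
  weyl_braid_equiv s t -> weyl_braid_equiv t u -> weyl_braid_equiv s u.
Proof.
move=> H; elim: H u => // x y z Hxy _ IH u Hzu.
by apply: rt1n_trans Hxy _; apply: IH.
Qed.

Lemma be_left (R : realType) d (p q : seq 'M[R]_d) a b :
  weyl_braid_equiv (p ++ a :: b :: q) (p ++ (a *m b *m invmx a) :: a :: q).
Proof. apply: rt1n_trans (rt1n_refl _ _ _); exact: braid_l. Qed.

Lemma be_right (R : realType) d (p q : seq 'M[R]_d) a b :
  weyl_braid_equiv (p ++ a :: b :: q) (p ++ b :: (invmx b *m a *m b) :: q).
Proof. apply: rt1n_trans (rt1n_refl _ _ _); exact: braid_r. Qed.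

Definition conjl (R : realType) d (m : seq 'M[R]_d) (a : 'M[R]_d) :=
  foldr (fun x acc => x *m acc *m invmx x) a m.

Lemma be_slide (R : realType) d (p q m : seq 'M[R]_d) a :
  weyl_braid_equiv (p ++ m ++ a :: q) (p ++ conjl m a :: m ++ q).
Proof.
elim: m p => [|x m IH] p /=; first exact: be_refl.
have := IH (rcons p x); rewrite -cats1 -!catA /= => H.
apply: be_trans H _; exact: be_left.
Qed.

Lemma be_pair_front (R : realType) d (p1 p2 q : seq 'M[R]_d) t :
  t *m t = 1%:M -> invmx t = t ->
  weyl_braid_equiv (p1 ++ p2 ++ t :: t :: q) (p1 ++ t :: t :: p2 ++ q).
Proof.
move=> tt it.
elim: p2 p1 => [|x p2 IH] p1 /=; first exact: be_refl.
have := IH (rcons p1 x); rewrite -cats1 -!catA /= => H.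
apply: be_trans H _.
apply: be_trans (be_right _ _ _ _) _.
rewrite it.
have E : forall s, p1 ++ t :: s = rcons p1 t ++ s by move=> s; rewrite -cats1 -catA.
rewrite !E; apply: be_trans (be_right _ _ _ _) _.
rewrite it -!mulmxA tt mulmx1 mulmxA tt mul1mx.
exact: be_refl.
Qed.

Lemma mprod_cat (R : realType) d (p q : seq 'M[R]_d) :
  mprod (p ++ q) = mprod p *m mprod q.
Proof. by elim: p => [|x p IH] /=; rewrite /mprod /= ?mul1mx // -mulmxA -IH. Qed.


Definition rs_ok (R : realType) d (rs : seq 'rV[R]_d) :=
  [/\ 0 \notin rs,
      (forall a b, a \in rs -> b \in rs -> b *m refl_mx a \in rs)
    & (forall a (c : R), a \in rs -> c *: a \in rs -> c = 1 \/ c = -1)].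

Lemma rs_ok_of (R : realType) d (rs : seq 'rV[R]_d) :
  reduced_root_system rs -> rs_ok rs.
Proof. by case=> [[_ H0 _] [Hc _ Hr]]; split. Qed.

Lemma root_nz (R : realType) d (rs : seq 'rV[R]_d) a :
  rs_ok rs -> a \in rs -> dot a a != 0.
Proof.
case=> H0 _ _ Ha; rewrite gt_eqF // dot_gt0 //.
by apply/eqP => E; rewrite -E Ha in H0.
Qed.

Lemma root_opp (R : realType) d (rs : seq 'rV[R]_d) a :
  rs_ok rs -> a \in rs -> - a \in rs.
Proof.
move=> ok Ha; have [_ Hc _] := ok.
by rewrite -(refl_root (root_nz ok Ha)); apply: Hc.
Qed.

Lemma wr_invol (R : realType) d (rs : seq 'rV[R]_d) t :
  rs_ok rs -> weyl_reflection rs t -> t *m t = 1%:M /\ invmx t = t.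
Proof.
move=> ok [a Ha ->]; have nz := root_nz ok Ha.
by split; [apply: refl_invol | apply: invmx_refl].
Qed.

Lemma wr_conj (R : realType) d (rs : seq 'rV[R]_d) a b :
  rs_ok rs -> weyl_reflection rs a -> weyl_reflection rs b ->
  weyl_reflection rs (a *m b *m invmx a).
Proof.
move=> ok [x Hx ->] [y Hy ->]; have [_ Hc _] := ok.
rewrite invmx_refl ?(root_nz ok Hx) // refl_conj ?(root_nz ok Hx) ?(root_nz ok Hy) //.
by exists (y *m refl_mx x) => //; apply: Hc.
Qed.

Definition allref (R : realType) d (rs : seq 'rV[R]_d) (s : seq 'M[R]_d) :=
  forall t, t \in s -> weyl_reflection rs t.

Lemma allref_cat (R : realType) d (rs : seq 'rV[R]_d) p q :
  allref rs (p ++ q) <-> allref rs p /\ allref rs q.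
Proof.
split=> [H|[H1 H2]].
  by split=> t Ht; apply: H; rewrite mem_cat Ht ?orbT.
by move=> t; rewrite mem_cat => /orP[]; [apply: H1|apply: H2].
Qed.

Lemma allref_cons (R : realType) d (rs : seq 'rV[R]_d) x q :
  allref rs (x :: q) <-> weyl_reflection rs x /\ allref rs q.
Proof.
split=> [H|[H1 H2]].
  by split=> [|t Ht]; apply: H; rewrite in_cons ?eqxx ?Ht ?orbT.
by move=> t; rewrite in_cons => /orP[/eqP->|]; [apply: H1|apply: H2].
Qed.

Lemma step_pres (R : realType) d (rs : seq 'rV[R]_d) s t :
  rs_ok rs -> braid_step (@mulmx R d d d) (@invmx R d) s t -> allref rs s ->
  [/\ allref rs t, size t = size s & mprod t = mprod s].
Proof.
move=> ok [] p q a b /allref_cat [Hp /allref_cons [Ha /allref_cons [Hb Hq]]].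
- have [aa ia] := wr_invol ok Ha.
  split; first (apply/allref_cat; split=> //; apply/allref_cons; split;
    [exact: wr_conj | by apply/allref_cons]).
  + by rewrite !size_cat.
  + rewrite !mprod_cat /mprod /= ia; congr (_ *m _).
    by rewrite !mulmxA -(mulmxA _ a a) aa mulmx1.
- have [bb ib] := wr_invol ok Hb.
  split; first (apply/allref_cat; split=> //; apply/allref_cons; split=> //;
    apply/allref_cons; split=> //).
  + by have := wr_conj ok Hb Ha; rewrite ib.
  + by rewrite !size_cat.
  + rewrite !mprod_cat /mprod /= ib; congr (_ *m _).
    by rewrite !mulmxA bb mul1mx.
Qed.

Lemma equiv_pres (R : realType) d (rs : seq 'rV[R]_d) s t :
  rs_ok rs -> weyl_braid_equiv s t -> allref rs s ->
  [/\ allref rs t, size t = size s & mprod t = mprod s].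
Proof.
move=> ok H; elim: H => // x y z Hxy _ IH Hx.
have [Hy e1 e2] := step_pres ok Hxy Hx.
by have [Hz f1 f2] := IH Hy; split => //; rewrite ?f1 ?f2.
Qed.


Lemma big_above (R : realType) (L : seq R) : exists e : R, 0 < e /\ e \notin L.
Proof.
exists (1 + \sum_(x <- L) `|x|); split.
  by rewrite ltr_pwDl // sumr_ge0.
apply/negP => H.
have : `|1 + \sum_(x <- L) `|x| | <= \sum_(x <- L) `|x|.
  by rewrite [X in _ <= X](big_rem _ H) /= lerDl sumr_ge0.
rewrite ger0_norm ?addr_ge0 ?sumr_ge0 // => /le_trans; move/(_ _ (lexx _)).
by rewrite gerDr ler10.
Qed.

Lemma generic_f (R : realType) d (rs : seq 'rV[R]_d) :
  (forall r, r \in rs -> dot r r != 0) ->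
  exists f : 'rV[R]_d, forall r, r \in rs -> dot f r != 0.
Proof.
elim: rs => [|r rs IH] Hnz; first by exists 0.
have [|f0 Hf0] := IH; first by move=> x Hx; apply: Hnz; rewrite in_cons Hx orbT.
have Hr : dot r r != 0 by apply: Hnz; rewrite in_cons eqxx.
case: (boolP (dot f0 r == 0)) => [/eqP z|nz]; last first.
  by exists f0 => x; rewrite in_cons => /orP[/eqP->|]; [|apply: Hf0].
have [e [e0 eL]] := big_above [seq - dot f0 x / dot r x | x <- rs].
exists (f0 + e *: r) => x; rewrite in_cons => /orP[/eqP->|Hx].
  by rewrite dotDl dotZl z add0r mulf_neq0 // gt_eqF.
rewrite dotDl dotZl; case: (boolP (dot r x == 0)) => [/eqP->|nrx].
  by rewrite mulr0 addr0 Hf0.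
apply/negP => /eqP E; move: eL; apply/negP; rewrite negbK.
apply/mapP; exists x => //.
apply: (mulIf nrx); rewrite mulfVK //.
by apply/eqP; rewrite -addr_eq0 addrC E.
Qed.

Definition pr (R : realType) d (rs : seq 'rV[R]_d) (f : 'rV[R]_d) (t : 'M[R]_d) :=
  nth 0 rs (find (fun a => (0 < dot f a) && (refl_mx a == t)) rs).

Lemma parallel_eq (R : realType) d (rs : seq 'rV[R]_d) f a b (c : R) :
  rs_ok rs -> a \in rs -> b \in rs -> 0 < dot f a -> 0 < dot f b ->
  a = c *: b -> a = b.
Proof.
move=> ok Ha Hb pa pb E; have [_ _ Hr] := ok.
have := Hr b c Hb; rewrite -E => /(_ Ha) [c1|cm1].
  by rewrite E c1 scale1r.
by move: pa; rewrite E cm1 scaleN1r dotNr oppr_gt0 ltNge ltW.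
Qed.

Lemma refl_inj (R : realType) d (rs : seq 'rV[R]_d) f a b :
  rs_ok rs -> a \in rs -> b \in rs -> 0 < dot f a -> 0 < dot f b ->
  refl_mx a = refl_mx b -> a = b.
Proof.
move=> ok Ha Hb pa pb E.
set k := 2 / dot b b * dot a b.
apply: (parallel_eq (c := k / 2) ok Ha Hb pa pb).
have E1 : a - k *: b = - a by rewrite -refl_act -E refl_root // (root_nz ok Ha).
have E2 : k *: b = 2 *: a.
  have -> : k *: b = a - (a - k *: b) by rewrite opprB addrC subrK.
  by rewrite E1 opprK scaler_nat mulr2n.
by rewrite [k / 2]mulrC -scalerA E2 scalerA mulVf ?scale1r // pnatr_eq0.
Qed.

Lemma pr_spec (R : realType) d (rs : seq 'rV[R]_d) f t :
  rs_ok rs -> (forall r, r \in rs -> dot f r != 0) -> weyl_reflection rs t ->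
  [/\ pr rs f t \in rs, 0 < dot f (pr rs f t) & t = refl_mx (pr rs f t)].
Proof.
move=> ok gen [a Ha ->].
set P := fun a0 => (0 < dot f a0) && (refl_mx a0 == refl_mx a).
have hP : has P rs.
  apply/hasP; case: (ltgtP 0 (dot f a)) => [pa|na|za].
  - by exists a => //; rewrite /P pa eqxx.
  - exists (- a); first exact: root_opp.
    by rewrite /P dotNr oppr_gt0 na refl_opp eqxx.
  - by move: (gen a Ha); rewrite -za eqxx.
have := nth_find 0 hP; rewrite /P -/(pr rs f (refl_mx a)) => /andP[p1 /eqP p2].
by split => //; rewrite mem_nth // -has_find.
Qed.

Lemma pr_uniq (R : realType) d (rs : seq 'rV[R]_d) f a :
  rs_ok rs -> (forall r, r \in rs -> dot f r != 0) -> a \in rs -> 0 < dot f a ->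
  pr rs f (refl_mx a) = a.
Proof.
move=> ok gen Ha pa.
have [h1 h2 h3] := pr_spec ok gen (ex_intro2 _ _ a Ha erefl).
by apply: refl_inj ok h1 Ha h2 pa _.
Qed.

Definition H (R : realType) d (f a : 'rV[R]_d) := dot f a / Num.sqrt (dot a a).

Definition rk (R : realType) d (rs : seq 'rV[R]_d) (f : 'rV[R]_d) (t : 'M[R]_d) :=
  count (fun r => (0 < dot f r) && (H f r < H f (pr rs f t))) rs.

Lemma count_lt (T : eqType) (P1 P2 : pred T) (s : seq T) y :
  (forall x, P1 x -> P2 x) -> y \in s -> P2 y -> ~~ P1 y ->
  (count P1 s < count P2 s)%N.
Proof.
move=> sub; elim: s => // x s IH; rewrite in_cons => /orP[/eqP<-|Hy] P2y nP1y /=.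
  rewrite (negbTE nP1y) P2y add0n add1n ltnS; apply: sub_count => z; exact: sub.
have := IH Hy P2y nP1y; case: (boolP (P1 x)) => [/sub ->|_] /=; first by rewrite ltn_add2l.
by move=> h; apply: leq_trans h _; rewrite leq_addl.
Qed.

Lemma rk_lt (R : realType) d (rs : seq 'rV[R]_d) f t1 t2 :
  rs_ok rs -> (forall r, r \in rs -> dot f r != 0) ->
  weyl_reflection rs t1 -> H f (pr rs f t1) < H f (pr rs f t2) ->
  (rk rs f t1 < rk rs f t2)%N.
Proof.
move=> ok gen w1 lt12; have [i1 p1 _] := pr_spec ok gen w1.
apply: (count_lt (y := pr rs f t1)) => //.
- by move=> x /andP[-> h] /=; apply: lt_trans h lt12.
- by rewrite p1 lt12.
- by rewrite ltxx andbF.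
Qed.

Lemma rk_bound (R : realType) d (rs : seq 'rV[R]_d) f t : (rk rs f t < (size rs).+1)%N.
Proof. by rewrite ltnS count_size. Qed.

Definition gmu (R : realType) d (rs : seq 'rV[R]_d) f (acc : nat) (s : seq 'M[R]_d) :=
  foldl (fun acc t => acc * (size rs).+1 + rk rs f t)%N acc s.

Lemma gmu_acc (R : realType) d (rs : seq 'rV[R]_d) f acc s :
  gmu rs f acc s = (acc * (size rs).+1 ^ size s + gmu rs f 0 s)%N.
Proof.
rewrite /gmu; elim: s acc => [|t s IH] acc /=; first by rewrite expn0 muln1 addn0.
rewrite IH [X in (_ = _ + X)%N]IH; rewrite expnS.
by rewrite mul0n add0n mulnDl mulnA addnA.
Qed.

Lemma gmu_bound (R : realType) d (rs : seq 'rV[R]_d) f s :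
  (gmu rs f 0 s < (size rs).+1 ^ size s)%N.
Proof.
elim/last_ind: s => [|s t IH] /=; first by rewrite /gmu /= expn0.
rewrite /gmu -cats1 foldl_cat /= -/(gmu rs f 0 s) size_cat /= addn1 expnS.
move: IH (rk_bound rs f t); set N := (size rs).+1; set M := (N ^ size s)%N.
set g := gmu _ _ _ _; set r := rk _ _ _; clearbody N M g r => h1 h2.
rewrite [(N * M)%N]mulnC; apply: (@leq_trans (g * N + N)%N); first by rewrite ltn_add2l.
by rewrite -mulSnr leq_mul2r h1 orbT.
Qed.

Lemma gmu_cat (R : realType) d (rs : seq 'rV[R]_d) f acc p q :
  gmu rs f acc (p ++ q) = gmu rs f (gmu rs f acc p) q.
Proof. exact: foldl_cat. Qed.

Lemma gmu_cons (R : realType) d (rs : seq 'rV[R]_d) f acc a q :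
  gmu rs f acc (a :: q) = gmu rs f (acc * (size rs).+1 + rk rs f a)%N q.
Proof. by []. Qed.

Lemma mu_lt (R : realType) d (rs : seq 'rV[R]_d) f p a b q1 q2 :
  size q1 = size q2 -> (rk rs f a < rk rs f b)%N ->
  (gmu rs f 0 (p ++ a :: q1) < gmu rs f 0 (p ++ b :: q2))%N.
Proof.
move=> sz lt; rewrite !gmu_cat !gmu_cons (gmu_acc _ _ _ q1) (gmu_acc _ _ _ q2) -sz.
have := gmu_bound rs f q1; have := gmu_bound rs f q2; rewrite -sz.
move: lt; set N := (size rs).+1; set M := (N ^ size q1)%N; set X := gmu _ _ _ p.
set g1 := gmu _ _ _ q1; set g2 := gmu _ _ _ q2; set ra := rk _ _ a; set rb := rk _ _ b.
clearbody N M X g1 g2 ra rb => h1 h2 h3.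
apply: (@leq_trans ((X * N + ra).+1 * M)%N).
  by rewrite mulSnr ltn_add2l.
apply: leq_trans (leq_addr _ _); rewrite leq_mul2r; apply/orP; right.
by rewrite -addnS leq_add2l.
Qed.


Lemma key_ineq (R : realType) d (rs : seq 'rV[R]_d) f beta x :
  rs_ok rs -> beta \in rs -> x \in rs -> 0 < dot f beta -> 0 < dot f x ->
  0 < dot f (- (x *m refl_mx beta)) ->
  H f beta <= H f x -> H f beta <= H f (- (x *m refl_mx beta)) -> x = beta.
Proof.
move=> ok Hb Hx pb px pz h1 h2.
have nB := root_nz ok Hb; have nX := root_nz ok Hx.
have B0 : 0 < dot beta beta by rewrite lt_def nB dot_ge0.
have X0 : 0 < dot x x by rewrite lt_def nX dot_ge0.
have zz : dot (- (x *m refl_mx beta)) (- (x *m refl_mx beta)) = dot x x.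
  by rewrite dotNl dotNr opprK dot_refl.
have fz : dot f (- (x *m refl_mx beta)) = (2 / dot beta beta * dot x beta) * dot f beta - dot f x.
  by rewrite refl_act opprB dotBr dotZr.
move: h1 h2 pz; rewrite /H zz fz.
set B := dot beta beta; set X := dot x x; set e := dot x beta.
set p := dot f beta; set q := dot f x; set c := 2 / B * e.
have sB0 : 0 < Num.sqrt B by rewrite sqrtr_gt0.
have sX0 : 0 < Num.sqrt X by rewrite sqrtr_gt0.
have sB2 : Num.sqrt B * Num.sqrt B = B by rewrite -expr2 sqr_sqrtr // ltW.
have sX2 : Num.sqrt X * Num.sqrt X = X by rewrite -expr2 sqr_sqrtr // ltW.
have cB : c * B = 2 * e by rewrite /c; field; rewrite gt_eqF.
set sB := Num.sqrt B in sB0 sB2 *; set sX := Num.sqrt X in sX0 sX2 *.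
move=> h1 h2 pz.
have k1 : p * sX <= q * sB.
  have := ler_wpM2r (ltW (mulr_gt0 sB0 sX0)) h1.
  have -> : p / sB * (sB * sX) = p * sX by field; rewrite gt_eqF.
  have -> : q / sX * (sB * sX) = q * sB by field; rewrite gt_eqF.
  done.
have k2 : p * sX <= (c * p - q) * sB.
  have := ler_wpM2r (ltW (mulr_gt0 sB0 sX0)) h2.
  have -> : p / sB * (sB * sX) = p * sX by field; rewrite gt_eqF.
  have -> : (c * p - q) / sX * (sB * sX) = (c * p - q) * sB by field; rewrite gt_eqF.
  done.
have k3 : 2 * sX <= c * sB.
  rewrite -(ler_pM2l pb).
  have -> : p * (2 * sX) = p * sX + p * sX by ring.
  have -> : p * (c * sB) = q * sB + (c * p - q) * sB by ring.
  exact: lerD.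
have k4 : 4 * X <= c * c * B.
  have -> : c * c * B = (c * sB) * (c * sB) by rewrite -sB2; ring.
  have -> : 4 * X = (2 * sX) * (2 * sX) by rewrite -sX2; ring.
  by apply: ler_pM => //; rewrite mulr_ge0 // ltW.
have k5 : X * B <= e * e by nra.
set lam := e / B.
have lB : lam * B = e by rewrite /lam; field; rewrite gt_eqF.
have D : dot (x - lam *: beta) (x - lam *: beta) = X - 2 * lam * e + lam * lam * B.
  rewrite !dotBl !dotBr !dotZl !dotZr (dotC beta x) /X /B /e; ring.
have D0 : dot (x - lam *: beta) (x - lam *: beta) <= 0.
  rewrite D; have : (X - 2 * lam * e + lam * lam * B) * B <= 0 by nra.
  by move=> h; rewrite -(ler_pM2r B0) mul0r.
have : x - lam *: beta = 0 by apply: dot_eq0; apply/eqP; rewrite eq_le D0 dot_ge0.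
move/eqP; rewrite subr_eq0 => /eqP E.
exact: (parallel_eq ok Hx Hb px pb E).
Qed.


Definition tr (R : realType) d (p : seq 'M[R]_d) (w : 'rV[R]_d) :=
  foldr (fun t acc => acc *m t) w p.

Lemma mprod_cons (R : realType) d (t : 'M[R]_d) p : mprod (t :: p) = t *m mprod p.
Proof. by []. Qed.

Lemma dot_mprod (R : realType) d (rs : seq 'rV[R]_d) p v w :
  allref rs p -> dot (v *m mprod p) w = dot v (tr p w).
Proof.
elim: p v => [|t p IH] v; first by rewrite /mprod /= mulmx1.
move/allref_cons => [[a Ha Et] Hp].
by rewrite mprod_cons mulmxA IH // dot_mulmx /= Et refl_sym.
Qed.

Lemma tr_in (R : realType) d (rs : seq 'rV[R]_d) p w :
  rs_ok rs -> allref rs p -> w \in rs -> tr p w \in rs.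
Proof.
move=> ok; elim: p => [|t p IH] //= /allref_cons [[a Ha ->] Hp] Hw.
by have [_ Hc _] := ok; apply: Hc => //; apply: IH.
Qed.

Lemma split_neg (R : realType) d (f : 'rV[R]_d) (p0 : seq 'M[R]_d) w :
  0 < dot f w -> ~ 0 < dot f (tr p0 w) ->
  exists p tj m, [/\ p0 = p ++ tj :: m, 0 < dot f (tr m w) & ~ 0 < dot f (tr m w *m tj)].
Proof.
move=> pw; elim: p0 => [|a p0 IH] /=; first by [].
case: (boolP (0 < dot f (tr p0 w))) => [h|/negP h] nh.
  by exists [::], a, p0.
have [p [tj [m [E h1 h2]]]] := IH h.
by exists (a :: p), tj, m; rewrite E.
Qed.

Lemma conjl_refl (R : realType) d (rs : seq 'rV[R]_d) m beta :
  rs_ok rs -> allref rs m -> beta \in rs -> conjl m (refl_mx beta) = refl_mx (tr m beta).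
Proof.
move=> ok; elim: m => [|t m IH] //= /allref_cons [[a Ha ->] Hm] Hb.
rewrite IH // invmx_refl ?(root_nz ok Ha) // refl_conj ?(root_nz ok Ha) //.
exact: (root_nz ok (tr_in ok Hm Hb)).
Qed.

Lemma sum_pos (R : realType) d (rs : seq 'rV[R]_d) f s v :
  rs_ok rs -> (forall r, r \in rs -> dot f r != 0) -> allref rs s ->
  (forall p0 t rest, s = p0 ++ t :: rest -> 0 < dot (v *m mprod p0) (pr rs f t)) ->
  s != [::] -> 0 < dot (v - v *m mprod s) f.
Proof.
move=> ok gen; elim: s v => [//|t s IH] v /allref_cons [Ht Hs] Hpos _.
have [Hb pb Et] := pr_spec ok gen Ht.
set beta := pr rs f t in Hb pb Et.
rewrite mprod_cons mulmxA.
have -> : v - v *m t *m mprod s = (v - v *m t) + (v *m t - v *m t *m mprod s)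
  by rewrite addrA subrK.
rewrite dotDl.
have h1 : 0 < dot (v - v *m t) f.
  have := Hpos [::] t s erefl; rewrite /mprod /= mulmx1 -/beta => hv.
  have pf : 0 < dot beta f by rewrite dotC.
  rewrite Et refl_act opprB addrC subrK dotZl.
  have B0 : 0 < dot beta beta by rewrite lt_def (root_nz ok Hb) dot_ge0.
  by rewrite !mulr_gt0 // invr_gt0.
have h2 : 0 <= dot (v *m t - v *m t *m mprod s) f.
  case: s IH Hs Hpos => [|t' s] IH Hs Hpos.
    by rewrite /mprod /= mulmx1 subrr dot0l.
  apply: ltW; apply: IH => // p0 t0 rest E.
  have := Hpos (t :: p0) t0 rest; rewrite E => /(_ erefl).
  by rewrite mprod_cons mulmxA.
lra.
Qed.


Lemma main_desc (R : realType) d (rs : seq 'rV[R]_d) f :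
  rs_ok rs -> (forall r, r \in rs -> dot f r != 0) ->
  forall s, allref rs s -> mprod s = 1%:M -> s != [::] ->
  exists s', weyl_braid_equiv s s' /\ exists p t q, s' = p ++ t :: t :: q.
Proof.
move=> ok gen s; move: {2}(gmu rs f 0 s).+1 (ltnSn (gmu rs f 0 s)) => M.
elim: M s => [//|M IH] s Hmu Hs Hprod Hne.
have IH' : forall s2, weyl_braid_equiv s s2 -> (gmu rs f 0 s2 < gmu rs f 0 s)%N ->
    exists s', weyl_braid_equiv s s' /\ exists p t q, s' = p ++ t :: t :: q.
  move=> s2 E lt; have [A2 sz2 pr2] := equiv_pres ok E Hs.
  have [|||s' [E' P']] := IH s2 _ A2.
  - exact: leq_trans lt Hmu.
  - by rewrite pr2.
  - by rewrite -size_eq0 sz2 size_eq0.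
  by exists s'; split => //; apply: be_trans E E'.
have [[p0 [t [rest [E nh]]]]|none] :=
  classic (exists p0 t rest, s = p0 ++ t :: rest /\ ~ 0 < dot (f *m mprod p0) (pr rs f t)); last first.
  have Hpos : forall p0 t rest, s = p0 ++ t :: rest -> 0 < dot (f *m mprod p0) (pr rs f t).
    move=> p0 t rest E.
    case: (boolP (0 < dot (f *m mprod p0) (pr rs f t))) => // /negP nh.
    by exfalso; apply: none; exists p0, t, rest.
  have := sum_pos ok gen Hs Hpos Hne.
  by rewrite Hprod mulmx1 subrr dot0l ltxx.
have Hs' : allref rs (p0 ++ t :: rest) by rewrite -E.
move: Hs' => /allref_cat [Hp0 /allref_cons [Ht Hrest]].
have [Hb pb Et] := pr_spec ok gen Ht; set beta := pr rs f t in Hb pb Et nh.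
rewrite (dot_mprod _ _ Hp0) in nh.
have [p [tj [m [E0 px nz]]]] := split_neg pb nh.
have Hp0' : allref rs (p ++ tj :: m) by rewrite -E0.
move: Hp0' => /allref_cat [Hp /allref_cons [Htj Hm]].
have Hx := tr_in ok Hm Hb; set x := tr m beta in Hx px nz.
have [Hbj pbj Etj] := pr_spec ok gen Htj; set bj := pr rs f tj in Hbj pbj Etj.
have E1 : weyl_braid_equiv s (p ++ tj :: refl_mx x :: m ++ rest).
  have := be_slide (p ++ [:: tj]) rest m t.
  by rewrite -!catA /= Et (conjl_refl ok Hm Hb) -Et E E0 -catA.
have Hz : - (x *m tj) \in rs by rewrite Etj; apply: root_opp => //; have [_ Hc _] := ok; apply: Hc.
have pz : 0 < dot f (- (x *m tj)).
  rewrite dotNr oppr_gt0; case: (ltgtP (dot f (x *m tj)) 0) => [//|h|h].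
    by exfalso; apply: nz.
  by move: (gen _ (root_opp ok Hz)); rewrite opprK h eqxx.
set z := - (x *m tj) in Hz pz.
have Es : s = p ++ tj :: (m ++ t :: rest) by rewrite E E0 -catA.
case: (ltP (H f x) (H f bj)) => [hx|hx].
  apply: IH' (be_trans E1 (be_right _ _ _ _)) _.
  rewrite [in X in (_ < X)%N]Es; apply: mu_lt; first by rewrite /= !size_cat /= addnS.
  apply: (rk_lt ok gen (ex_intro2 _ _ x Hx erefl)).
  by rewrite (pr_uniq ok gen Hx px).
case: (ltP (H f z) (H f bj)) => [hz|hz].
  apply: IH' (be_trans E1 (be_left _ _ _ _)) _.
  rewrite [in X in (_ < X)%N]Es; apply: mu_lt; first by rewrite /= !size_cat /= addnS.
  have -> : tj *m refl_mx x *m invmx tj = refl_mx z.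
    rewrite /z Etj invmx_refl ?(root_nz ok Hbj) // refl_conj ?(root_nz ok Hbj) ?(root_nz ok Hx) //.
    by rewrite refl_opp.
  apply: (rk_lt ok gen (ex_intro2 _ _ z Hz erefl)).
  by rewrite (pr_uniq ok gen Hz pz).
have xb : x = bj.
  apply: (key_ineq ok Hbj Hx pbj px); [by rewrite -Etj | done | by rewrite -Etj].
exists (p ++ tj :: refl_mx x :: m ++ rest); split => //.
by exists p, tj, (m ++ rest); rewrite xb -Etj.
Qed.

Unset Implicit Arguments. Set Strict Implicit.

Theorem proposition2p2 (R : realType) (d : nat) (rs : seq 'rV[R]_d) (n : nat)
    (ts : seq 'M[R]_d) :
  reduced_root_system rs ->
  (0 < n)%N -> size ts = n ->
  (forall t, t \in ts -> weyl_reflection rs t) ->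
  mprod ts = 1%:M ->
  exists ts' : seq 'M[R]_d,
    [/\ weyl_braid_equiv ts ts',
        size ts' = n,
        (forall t, t \in ts' -> weyl_reflection rs t),
        mprod ts' = 1%:M
      & exists (t : 'M[R]_d) (rest : seq 'M[R]_d), ts' = t :: t :: rest].
Proof.
move=> Hrs n0 sz Hts Hprod.
have ok := rs_ok_of Hrs.
have [f gen] := generic_f (fun r Hr => root_nz ok Hr).
have ne : ts != [::] by rewrite -size_eq0 sz -lt0n.
have [s' [E [p [t [q Es']]]]] := main_desc ok gen Hts Hprod ne.
have [A1 sz1 pr1] := equiv_pres ok E Hts.
have Ht : weyl_reflection rs t by apply: A1; rewrite Es' mem_cat in_cons eqxx orbT.
have [tt it] := wr_invol ok Ht.
have E3 : weyl_braid_equiv ts (t :: t :: p ++ q).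
  apply: be_trans E _; rewrite Es'; exact: (@be_pair_front _ _ [::] p q t tt it).
have [A3 sz3 pr3] := equiv_pres ok E3 Hts.
exists (t :: t :: p ++ q); split => //.
- by rewrite sz3.
- by rewrite pr3.
- by exists t, (p ++ q).
Qed.
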